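(* For any integers $n\ge k\ge1$, $$w(n,k)=\sum_{j=1}^k\binom{n-j}{k-j}N(n,j)\quad\text{and}\quad N(n,k)=\sum_{j=1}^k\binom{n-j}{k-j}(-1)^{k-j}w(n,j).$$
   Context: For $n\ge k\ge1$, $N(n,k)=\frac1n\binom{n}{k}\binom{n}{k-1}$ (Narayana number) and $w(n,k)=\frac1k\binom{n-1}{k-1}\binom{n+k}{k-1}$. *)

(* Defs.v *)
From mathcomp Require Import all_boot all_order all_algebra.
Set Implicit Arguments. Unset Strict Implicit. Unset Printing Implicit Defensive.
Import Order.TTheory GRing.Theory Num.Theory.
Local Open Scope ring_scope.

Definition narayana (n k : nat) : rat :=
  (n%:R)^-1 * ('C(n, k))%:R * ('C(n, k.-1))%:R.

Definition wnum (n k : nat) : rat :=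
  (k%:R)^-1 * ('C(n.-1, k.-1))%:R * ('C(n + k, k.-1))%:R.

(* Main.v *)
Require Import Defs.
From mathcomp Require Import all_boot all_order all_algebra.
From mathcomp Require Import zify ring lra.
Import Order.TTheory GRing.Theory Num.Theory.

Lemma binmul n k j : (j <= k)%N -> (k <= n)%N ->
  ('C(n-j,k-j) * 'C(n,j) = 'C(n,k) * 'C(k,j))%N.
Proof.
move=> hjk hkn.
have hpos : (0 < j`! * (k-j)`! * (n-k)`!)%N by rewrite !muln_gt0 !fact_gt0.
apply/eqP; rewrite -(eqn_pmul2r hpos); apply/eqP.
have e1 : ('C(n-j,k-j) * ((k-j)`! * (n-j-(k-j))`!) = (n-j)`!)%N
  by apply: bin_fact; lia.
have e2 := bin_fact (leq_trans hjk hkn).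
have e3 := bin_fact hkn.
have e4 := bin_fact hjk.
rewrite (_ : (n - j - (k - j) = n - k)%N) in e1; last lia.
transitivity ('C(n - j, k - j) * ((k - j)`! * (n - k)`!) * ('C(n, j) * j`!))%N.
  ring.
rewrite e1.
transitivity n`!; first by rewrite -e2; ring.
rewrite -e3 -e4; ring.
Qed.

Lemma vand n k : (1 <= k)%N ->
  (\sum_(1 <= j < k.+1) 'C(k,j) * 'C(n,j.-1) = 'C(n+k,k.-1))%N.
Proof.
case: k => // k _.
rewrite big_add1 /= -(binomial.Vandermonde n k.+1 k) big_mkord.
apply: eq_bigr => i _.
have hi : (i.+1 <= k.+1)%N by have := ltn_ord i; lia.
by rewrite mulnC -(bin_sub hi) subSS.
Qed.

Local Open Scope ring_scope.

Lemma natsum n k : (1 <= k)%N -> (k <= n)%N ->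
  (\sum_(1 <= j < k.+1) 'C(n-j,k-j) * 'C(n,j) * 'C(n,j.-1) = 'C(n,k) * 'C(n+k,k.-1))%N.
Proof.
move=> h1 h2; rewrite -vand // big_distrr /=.
apply: eq_big_nat => j /andP [_ hj].
by rewrite binmul // mulnA.
Qed.

Lemma part1 n k : (1 <= k)%N -> (k <= n)%N ->
  wnum n k = \sum_(1 <= j < k.+1) ('C(n - j, k - j))%:R * narayana n j.
Proof.
move=> h1 h2.
have -> : \sum_(1 <= j < k.+1) ('C(n - j, k - j))%:R * narayana n j =
   n%:R^-1 * (\sum_(1 <= j < k.+1) 'C(n-j,k-j) * 'C(n,j) * 'C(n,j.-1))%N%:R.
  rewrite natr_sum mulr_sumr; apply: eq_bigr => j _.
  by rewrite /narayana !natrM; ring.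
rewrite natsum // /wnum.
have hd := mul_bin_diag n k.-1.
rewrite prednK // in hd.
have hn : (n%:R : rat) != 0 by rewrite pnatr_eq0 -lt0n; apply: leq_trans h2.
have hk : (k%:R : rat) != 0 by rewrite pnatr_eq0 -lt0n.
have hd' : (n%:R * ('C(n.-1, k.-1))%:R = k%:R * ('C(n, k))%:R :> rat)
  by rewrite -!natrM hd.
have e : ('C(n.-1, k.-1))%:R = k%:R * ('C(n, k))%:R / n%:R :> rat.
  by rewrite -hd' mulrC mulrA mulVf // mul1r.
rewrite natrM e; field; by apply/andP.
Qed.
Lemma altsum (m N : nat) : (m <= N)%N ->
  \sum_(t < m.+1) ('C(N - t, m - t))%:R * (-1) ^+ (m - t) * ('C(N, t))%:R
  = (m == 0%N)%:R :> rat.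
Proof.
move=> hm.
transitivity (('C(N, m))%:R * (-1 + 1 : rat) ^+ m).
  rewrite exprDn mulr_sumr; apply: eq_bigr => t _.
  have ht : (t <= m)%N by have := ltn_ord t; lia.
  have key : ('C(N - t, m - t))%:R * ('C(N, t))%:R = ('C(N, m))%:R * ('C(m, t))%:R :> rat
    by rewrite -!natrM binmul.
  rewrite expr1n -mulr_natr.
  transitivity ((-1) ^+ (m - t) * (('C(N - t, m - t))%:R * ('C(N, t))%:R) :> rat); first ring.
  rewrite key; ring.
rewrite addNr expr0n; case: m hm => [|m] hm /=; by rewrite ?bin0 ?mulr0 ?mulr1.
Qed.


Lemma alt n k i : (1 <= i)%N -> (i <= k)%N -> (k <= n)%N ->
  \sum_(1 <= j < k.+1) (if (i <= j)%N then ('C(n-j,k-j))%:R * (-1)^+(k-j) * ('C(n-i,j-i))%:R else 0)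
  = (i == k)%:R :> rat.
Proof.
move=> h1 h2 h3.
rewrite -big_mkcond (big_cat_nat _ (n:=i)) //=; last by lia.
rewrite [X in X + _]big_nat_cond [X in X + _]big1 ?add0r; last first.
  by move=> j /andP[/andP[_ hj] hij]; exfalso; lia.
rewrite big_nat_cond.
rewrite (eq_bigl (fun j => (i <= j < k.+1)%N)); last first.
  by move=> j; case: (leqP i j) => h; rewrite ?andbT ?andbF //= leqNgt h.
rewrite -{1}(add0n i) big_addn subSn // big_mkord.
have -> : (i == k) = (k - i == 0)%N by apply/eqP/eqP; lia.
rewrite -(@altsum (k - i) (n - i)); last by lia.
apply: eq_big => [t|t _]; have ht := ltn_ord t.
  by apply/andP; split; lia.
by rewrite !subnDA addnK (subnAC k t i) (subnAC n t i) -subnDA.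
Qed.

Theorem lemma4p4 (n k : nat) (hk : (1 <= k)%N) (hkn : (k <= n)%N) :
  wnum n k = \sum_(1 <= j < k.+1) ('C(n - j, k - j))%:R * narayana n j
  /\
  narayana n k =
    \sum_(1 <= j < k.+1) ('C(n - j, k - j))%:R * (-1) ^+ (k - j) * wnum n j.
Proof.
split; first exact: part1.
transitivity (\sum_(1 <= i < k.+1) (i == k)%:R * narayana n i).
  rewrite big_nat_recr //= eqxx mul1r big_nat_cond big1 ?add0r //.
  by move=> i /andP[/andP[_ hi] _]; rewrite (ltn_eqF hi) mul0r.
symmetry.
rewrite (eq_big_nat _ _ (F2 := fun j => \sum_(1 <= i < k.+1)
   (if (i <= j)%N then ('C(n - j, k - j))%:R * (-1) ^+ (k - j) * ('C(n - i, j - i))%:R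
     * narayana n i else 0))); last first.
  move=> j /andP[h1 h2]; rewrite part1 //; last by lia.
  have hj : (j.+1 <= k.+1)%N by lia.
  rewrite (big_nat_widen _ _ _ _ _ hj) big_mkcond mulr_sumr; apply: eq_bigr => i _.
  rewrite /= ltnS; case: ifP => _; last by rewrite mulr0.
  by rewrite !mulrA.
rewrite exchange_big_nat; apply: eq_big_nat => i /andP[h1 h2].
rewrite -(@alt n k i h1) //.
rewrite mulr_suml; apply: eq_bigr => j _.
by case: ifP => _; rewrite ?mul0r.
Qed.
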